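(* Let $k\in\mathbb{N}$ with $6\mid k$, let $h$ be an integer with $\gcd(h,k)=1$, and let $h'$ be an integer with $hh'\equiv-1\pmod{36k}$. Then $$\frac{\omega_{h,\frac{k}{6}}\,\omega_{h,\frac{k}{2}}\, \omega_{h,k}}{\omega_{h, \frac{k}{3}}}= \exp\!\left(-\frac{2\pi i}{36k} \left(18k + h\left(-9-9k-4k^2\right) + h' \left(9-2k^2 \right) \right)\right)$$ and $$\frac{\omega_{h,\frac{k}{3}}\,\omega_{h,\frac{k}{2}}\,\omega_{h,k}}{\omega_{h,\frac{k}{6}}^3} =\exp\!\left(- \frac{2\pi i}{18k} \left(h \left(9-2k^2 \right) + h'\left(-9-k^2 \right) \right)\right).$$
   Context: For coprime integers $h$ and $K\ge1$, $\omega_{h,K}=\exp(\pi i\, s(h,K))$, where $s(h,K)=\sum_{r=1}^{K-1}\frac{r}{K}\left(\frac{hr}{K}-\lfloor \frac{hr}{K}\rfloor-\frac12\right)$ is the Dedekind sum. Equivalently, with $\tilde h$ any integer satisfying $h\tilde h\equiv-1\pmod K$ and $\left(\frac{\cdot}{\cdot}\right)$ the Kronecker symbol: $\omega_{h,K}=\left(\frac{-K}{h}\right)\exp\!\left(-\pi i\left(\frac14(2-hK-h)+\frac1{12}(K-\frac1K)(2h-\tilde h+h^2\tilde h)\right)\right)$ if $h$ is odd, and $\omega_{h,K}=\left(\frac{-h}{K}\right)\exp\!\left(-\pi i\left(\frac14(K-1)+\frac1{12}(K-\frac1K)(2h-\tilde h+h^2\tilde h)\right)\right)$ if $K$ is odd.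 *)

(* Defs.v *)
From Stdlib Require Import Reals ZArith Znumtheory.
From Coquelicot Require Import Coquelicot.
Open Scope R_scope.

Definition expi (x : R) : C := (cos x, sin x).

(* Dedekind sum s(h,K) = sum_{r=1}^{K-1} (r/K) (hr/K - floor(hr/K) - 1/2).
   For K > 0, floor(hr/K) is the Euclidean (floor) division (h*r) / K in Z. *)
Definition dedekind_sum (h K : Z) : R :=
  sum_n_m (fun n : nat =>
      let r := Z.of_nat n in
      (IZR r / IZR K) *
      (IZR (h * r) / IZR K - IZR ((h * r) / K)%Z - 1 / 2))
    1 (Z.to_nat K - 1).

Definition omega (h K : Z) : C := expi (PI * dedekind_sum h K).

(* Main.v *)
Require Import Defs.
From Stdlib Require Import Reals ZArith Znumtheory.
From Coquelicot Require Import Coquelicot.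
From Stdlib Require Import List Lia Lra Permutation Bool.

Module W1.
Local Open Scope Z_scope.

Definition zr (n : nat) : list Z := map Z.of_nat (seq 0 n).
Definition S (n : nat) (f : Z -> Z) : Z := fold_right (fun x acc => f x + acc) 0 (zr n).

Lemma S_0 f : S 0 f = 0.
Proof. reflexivity. Qed.

Lemma fold_app (f : Z -> Z) l1 l2 :
  fold_right (fun x acc => f x + acc) 0 (l1 ++ l2) =
  fold_right (fun x acc => f x + acc) 0 l1 + fold_right (fun x acc => f x + acc) 0 l2.
Proof. induction l1; simpl; lia. Qed.

Lemma S_succ n f : S (Datatypes.S n) f = S n f + f (Z.of_nat n).
Proof. unfold S, zr. rewrite seq_S, map_app, fold_app. simpl. lia. Qed.

Lemma S_ext n f g : (forall x, 0 <= x < Z.of_nat n -> f x = g x) -> S n f = S n g.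
Proof.
  induction n; intros H; [reflexivity|].
  rewrite !S_succ, IHn, H; [reflexivity|lia|intros; apply H; lia].
Qed.

Lemma S_add n f g : S n (fun x => f x + g x) = S n f + S n g.
Proof. induction n; [unfold S; simpl; lia|]. rewrite !S_succ, IHn. ring. Qed.

Lemma S_sub n f g : S n (fun x => f x - g x) = S n f - S n g.
Proof. induction n; [unfold S; simpl; lia|]. rewrite !S_succ, IHn. ring. Qed.

Lemma S_scal n c f : S n (fun x => c * f x) = c * S n f.
Proof. induction n; [unfold S; simpl; lia|]. rewrite !S_succ, IHn. ring. Qed.

Lemma S_const n c : S n (fun _ => c) = c * Z.of_nat n.
Proof. induction n; [unfold S; simpl; lia|]. rewrite !S_succ, IHn. lia. Qed.

Lemma S_id n : 2 * S n (fun x => x) = Z.of_nat n * (Z.of_nat n - 1).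
Proof. induction n; [unfold S; simpl; lia|]. rewrite !S_succ. nia. Qed.

Lemma S_sq n : 6 * S n (fun x => x * x) = (Z.of_nat n - 1) * Z.of_nat n * (2 * Z.of_nat n - 1).
Proof. induction n; [unfold S; simpl; lia|]. rewrite !S_succ. nia. Qed.

Lemma S_front n f : S (Datatypes.S n) f = f 0 + S n (fun x => f (x + 1)).
Proof.
  induction n. { unfold S; simpl. lia. }
  rewrite S_succ, IHn, S_succ. replace (Z.of_nat (Datatypes.S n)) with (Z.of_nat n + 1) by lia. lia.
Qed.

Lemma S_swap n m (F : Z -> Z -> Z) :
  S n (fun i => S m (fun j => F i j)) = S m (fun j => S n (fun i => F i j)).
Proof.
  induction n. { rewrite S_0. transitivity (S m (fun _ => 0)).
    - rewrite S_const. lia.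
    - apply S_ext. intros. reflexivity. }
  rewrite S_succ, IHn, <- S_add. apply S_ext. intros. rewrite S_succ. reflexivity.
Qed.

Lemma fold_perm (f : Z -> Z) l l' : Permutation l l' ->
  fold_right (fun x acc => f x + acc) 0 l = fold_right (fun x acc => f x + acc) 0 l'.
Proof. induction 1; simpl; lia. Qed.

Lemma S_perm n (sigma : Z -> Z) f :
  (forall x, 0 <= x < Z.of_nat n -> 0 <= sigma x < Z.of_nat n) ->
  (forall x y, 0 <= x < Z.of_nat n -> 0 <= y < Z.of_nat n -> sigma x = sigma y -> x = y) ->
  S n (fun x => f (sigma x)) = S n f.
Proof.
  intros Hr Hi.
  assert (Hin : forall x, In x (zr n) <-> 0 <= x < Z.of_nat n).
  { intros x. unfold zr. rewrite in_map_iff. split.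
    - intros [y [<- Hy]]. apply in_seq in Hy. lia.
    - intros Hx. exists (Z.to_nat x). split; [lia|]. apply in_seq. lia. }
  assert (P : Permutation (map sigma (zr n)) (zr n)).
  { apply Permutation_map_same_l.
    - apply NoDup_map_NoDup_ForallPairs.
      + intros x y Hx Hy. apply Hi; apply Hin; auto.
      + unfold zr. apply FinFun.Injective_map_NoDup; [intros a b; lia|apply seq_NoDup].
    - intros y Hy. apply in_map_iff in Hy. destruct Hy as [x [<- Hx]].
      apply Hin. apply Hin in Hx. auto. }
  unfold S. transitivity (fold_right (fun x acc => f x + acc) 0 (map sigma (zr n))).
  - clear. induction (zr n) as [|a l IHl]; simpl; auto. rewrite IHl; auto.
  - apply fold_perm. exact P.
Qed.

Lemma S_tri n (psi : Z -> Z) :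
  S n (fun j => S (Z.to_nat j) psi) = S n (fun i => (Z.of_nat n - 1 - i) * psi i).
Proof.
  induction n; [unfold S; simpl; lia|].
  rewrite !S_succ, IHn, Nat2Z.id.
  replace (S n (fun i => (Z.of_nat (Datatypes.S n) - 1 - i) * psi i))
    with (S n (fun i => (Z.of_nat n - 1 - i) * psi i + psi i)).
  - rewrite S_add. lia.
  - apply S_ext. intros. lia.
Qed.

Lemma S_refl m (phi : Z -> Z) :
  S m (fun i => phi (Z.of_nat m - i)) = S m (fun i => phi (i + 1)).
Proof.
  induction m; [reflexivity|].
  rewrite S_front, S_succ.
  replace (Z.of_nat (Datatypes.S m) - 0) with (Z.of_nat m + 1) by lia.
  rewrite <- IHm. rewrite Z.add_comm. f_equal. apply S_ext. intros. f_equal. lia.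
Qed.

Lemma S_symm n (H : Z -> Z -> Z) :
  S n (fun i => S n (fun j => H i j)) =
  S n (fun j => S (Z.to_nat j) (fun i => H i j + H j i)) + S n (fun i => H i i).
Proof.
  induction n; [reflexivity|].
  rewrite !S_succ, Nat2Z.id.
  rewrite (S_ext n (fun i => S (Datatypes.S n) (fun j => H i j))
                   (fun i => S n (fun j => H i j) + H i (Z.of_nat n))).
  2:{ intros. rewrite S_succ. reflexivity. }
  rewrite S_add, IHn, S_add. change (S n (H (Z.of_nat n))) with (S n (fun j => H (Z.of_nat n) j)). lia.
Qed.

Lemma cnt1 N c : 0 <= c ->
  S N (fun s => if (1 <=? s) && (s <=? c) then 2 * s - 1 else 0) =
  Z.max 0 (Z.min c (Z.of_nat N - 1)) * Z.max 0 (Z.min c (Z.of_nat N - 1)).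
Proof.
  intros Hc. induction N; [unfold S; simpl; lia|].
  rewrite S_succ, IHN.
  destruct (1 <=? Z.of_nat N) eqn:E1; destruct (Z.of_nat N <=? c) eqn:E2; cbn [andb];
  apply Z.leb_le in E1 || apply Z.leb_gt in E1; apply Z.leb_le in E2 || apply Z.leb_gt in E2.
  - rewrite Nat2Z.inj_succ; replace (Z.min c (Z.succ (Z.of_nat N) - 1)) with (Z.of_nat N) by lia.
    replace (Z.min c (Z.of_nat N - 1)) with (Z.of_nat N - 1) by lia.
    replace (Z.max 0 (Z.of_nat N - 1)) with (Z.of_nat N - 1) by lia.
    replace (Z.max 0 (Z.of_nat N)) with (Z.of_nat N) by lia. ring.
  - rewrite Nat2Z.inj_succ; replace (Z.min c (Z.succ (Z.of_nat N) - 1)) with c by lia.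
    replace (Z.min c (Z.of_nat N - 1)) with c by lia. ring.
  - lia.
  - lia.
Qed.

Lemma cnt2 N c : 0 <= c ->
  S N (fun r => if c <? r then 1 else 0) = Z.max 0 (Z.of_nat N - 1 - c).
Proof.
  intros Hc. induction N; [rewrite S_0; simpl Z.of_nat; lia|].
  rewrite S_succ, IHN.
  destruct (c <? Z.of_nat N) eqn:E; [apply Z.ltb_lt in E | apply Z.ltb_ge in E]; lia.
Qed.

End W1.

Module W2.
Import W1.
Local Open Scope Z_scope.

Definition rho a K r := (a * r) mod K.
Definition X a K := S (Z.to_nat K) (fun r => r * rho a K r).
Definition Inv a K := S (Z.to_nat K) (fun j => S (Z.to_nat j)
   (fun i => if rho a K j <? rho a K i then 1 else 0)).

Lemma rho_range a K r : 0 < K -> 0 <= rho a K r < K.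
Proof. intros. unfold rho. apply Z.mod_pos_bound. auto. Qed.

Lemma divmod a K : 0 < K -> a = K * (a / K) + a mod K /\ 0 <= a mod K < K.
Proof. intros. split. apply Z.div_mod; lia. apply Z.mod_pos_bound; lia. Qed.

Lemma rho_inj a K x y : 0 < K -> Z.gcd K a = 1 -> 0 <= x < K -> 0 <= y < K ->
  rho a K x = rho a K y -> x = y.
Proof.
  intros HK Hg Hx Hy E. unfold rho in E.
  destruct (divmod (a*x) K HK) as [E1 _]. destruct (divmod (a*y) K HK) as [E2 _].
  assert (D : (K | a * (x - y))).
  { exists (a * x / K - a * y / K). nia. }
  apply Z.gauss in D; auto. destruct D as [t Ht].
  assert (t = 0) by nia. nia.
Qed.

Lemma S_rho_perm a K f : 0 < K -> Z.gcd K a = 1 ->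
  S (Z.to_nat K) (fun r => f (rho a K r)) = S (Z.to_nat K) f.
Proof.
  intros HK Hg. apply S_perm.
  - intros. pose proof (rho_range a K x HK). lia.
  - intros x y Hx Hy. apply (rho_inj a K); auto; lia.
Qed.

Lemma rho0 a K : rho a K 0 = 0.
Proof. unfold rho. rewrite Z.mul_0_r. apply Zmod_0_l. Qed.

Lemma S_id' K : 0 <= K -> 2 * S (Z.to_nat K) (fun x => x) = K * (K - 1).
Proof. intros. rewrite S_id. lia. Qed.

Lemma S_sq' K : 0 <= K -> 6 * S (Z.to_nat K) (fun x => x * x) = (K - 1) * K * (2 * K - 1).
Proof. intros. rewrite S_sq. rewrite Z2Nat.id; lia. Qed.

Lemma inv_point a K i j : 0 < K -> 0 <= i < j -> j < K ->
  K * (if rho a K j <? rho a K i then 1 else 0) = rho a K (j - i) - rho a K j + rho a K i.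
Proof.
  intros HK Hij HjK. unfold rho.
  destruct (divmod (a*j) K HK) as [E1 B1]. destruct (divmod (a*i) K HK) as [E2 B2].
  destruct ((a * j) mod K <? (a * i) mod K) eqn:E; [apply Z.ltb_lt in E|apply Z.ltb_ge in E].
  - rewrite <- (Z.mod_unique (a * (j - i)) K (a*j/K - a*i/K - 1) ((a * j) mod K - (a * i) mod K + K)); lia.
  - rewrite <- (Z.mod_unique (a * (j - i)) K (a*j/K - a*i/K) ((a * j) mod K - (a * i) mod K)); lia.
Qed.

Lemma meyer a K : 0 < K -> Z.gcd K a = 1 ->
  2 * K * Inv a K = K * (K - 1) * (2 * K - 1) - 6 * X a K.
Proof.
  intros HK Hg. unfold Inv.
  set (n := Z.to_nat K).
  assert (En : Z.of_nat n = K) by (unfold n; lia).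
  set (r := rho a K).
  assert (H1 : K * S n (fun j => S (Z.to_nat j) (fun i => if r j <? r i then 1 else 0))
             = S n (fun j => S (Z.to_nat j) (fun i => r (i + 1)) - j * r j + S (Z.to_nat j) r)).
  { rewrite <- S_scal. apply S_ext. intros j Hj.
    rewrite <- S_scal.
    rewrite (S_ext _ _ (fun i => r (j - i) - r j + r i)).
    2:{ intros i Hi. apply inv_point; lia. }
    rewrite S_add, S_sub, S_const.
    rewrite <- (S_refl (Z.to_nat j) (fun d => r d)).
    rewrite Z2Nat.id by lia. lia. }
  rewrite S_add, S_sub, !S_tri in H1. rewrite En in H1.
  assert (H2 : S n (fun i => (K - 1 - i) * r (i + 1)) = S n (fun d => (K - d) * r d)).
  { pose proof (S_front n (fun d => (K - d) * r d)) as A.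
    pose proof (S_succ n (fun d => (K - d) * r d)) as B.
    rewrite A in B. unfold r in B at 1. rewrite rho0 in B. rewrite En in B.
    rewrite (S_ext n (fun i => (K - 1 - i) * r (i + 1)) (fun x => (K - (x + 1)) * r (x + 1))).
    - lia.
    - intros. f_equal. lia. }
  assert (Hsum : S n r = S n (fun x => x)) by (exact (S_rho_perm a K (fun x => x) HK Hg)).
  assert (Hid := S_id' K ltac:(lia)). fold n in Hid.
  rewrite H2 in H1.
  rewrite (S_ext _ (fun d => (K - d) * r d) (fun d => K * r d - d * r d)) in H1 by (intros; ring).
  rewrite (S_ext _ (fun i => (K - 1 - i) * r i) (fun d => (K - 1) * r d - d * r d)) in H1 by (intros; ring).
  rewrite !S_sub, !S_scal in H1. unfold X. fold n. fold r.
  lia.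
Qed.

End W2.

Module W3.
Import W1.
Import W2.
Local Open Scope Z_scope.

Definition fl (sg : Z -> Z) x y := if Bool.eqb (x <? y) (sg x <? sg y) then 0 else 1.
Definition Inv' (n : nat) (sg : Z -> Z) := S n (fun j => S (Z.to_nat j)
   (fun i => if sg j <? sg i then 1 else 0)).
Definition FF (n : nat) sg := S n (fun i => S n (fun j => fl sg i j)).

Definition goodp (n : nat) (sg : Z -> Z) :=
  (forall x, 0 <= x < Z.of_nat n -> 0 <= sg x < Z.of_nat n) /\
  (forall x y, 0 <= x < Z.of_nat n -> 0 <= y < Z.of_nat n -> sg x = sg y -> x = y).

Lemma fl_diag sg x : fl sg x x = 0.
Proof. unfold fl. rewrite !Z.ltb_irrefl. reflexivity. Qed.

Lemma fl_sym sg x y : x <> y -> sg x <> sg y -> fl sg y x = fl sg x y.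
Proof.
  intros H1 H2. unfold fl.
  destruct (x <? y) eqn:E1, (y <? x) eqn:E2, (sg x <? sg y) eqn:E3, (sg y <? sg x) eqn:E4;
  try reflexivity; rewrite ?Z.ltb_lt, ?Z.ltb_ge in *; lia.
Qed.

Lemma FF_inv n sg : goodp n sg -> FF n sg = 2 * Inv' n sg.
Proof.
  intros [Hr Hi]. unfold FF, Inv'. rewrite S_symm.
  rewrite (S_ext n (fun i => fl sg i i) (fun _ => 0)) by (intros; apply fl_diag).
  rewrite S_const, <- S_scal. rewrite Z.mul_0_l, Z.add_0_r.
  apply S_ext. intros j Hj. rewrite <- S_scal. apply S_ext. intros i Hi'.
  rewrite Z2Nat.id in Hi' by lia.
  assert (sg i <> sg j). { intro E. apply Hi in E; lia. }
  unfold fl. destruct (i <? j) eqn:E1, (j <? i) eqn:E2, (sg i <? sg j) eqn:E3, (sg j <? sg i) eqn:E4;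
  simpl; rewrite ?Z.ltb_lt, ?Z.ltb_ge in *; lia.
Qed.

Lemma fl_comp sg tau i j :
  fl (fun x => sg (tau x)) i j = fl tau i j + fl sg (tau i) (tau j) - 2 * (fl tau i j * fl sg (tau i) (tau j)).
Proof.
  unfold fl. destruct (i <? j), (tau i <? tau j), (sg (tau i) <? sg (tau j)); reflexivity.
Qed.

Lemma inv_comp n sg tau : goodp n sg -> goodp n tau ->
  exists q, Inv' n (fun x => sg (tau x)) = Inv' n sg + Inv' n tau + 2 * q.
Proof.
  intros Gs Gt.
  assert (Gst : goodp n (fun x => sg (tau x))).
  { destruct Gs as [Rs Is], Gt as [Rt It]. split.
    - intros. apply Rs, Rt; auto.
    - intros x y Hx Hy E. apply It; auto. }
  pose proof (FF_inv n _ Gst) as A. pose proof (FF_inv n _ Gs) as B. pose proof (FF_inv n _ Gt) as C.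
  unfold FF in A.
  rewrite (S_ext n _ (fun i => S n (fun j => fl tau i j) + S n (fun j => fl sg (tau i) (tau j))
       - 2 * S n (fun j => fl tau i j * fl sg (tau i) (tau j)))) in A.
  2:{ intros. rewrite <- S_scal, <- S_add, <- S_sub. apply S_ext. intros. apply fl_comp. }
  rewrite S_sub, S_add, S_scal in A.
  destruct Gt as [Rt It].
  assert (D : S n (fun i => S n (fun j => fl sg (tau i) (tau j))) = FF n sg).
  { rewrite (S_ext n _ (fun i => S n (fun y => fl sg (tau i) y))).
    - unfold FF. apply (S_perm n tau (fun x => S n (fun y => fl sg x y))); auto.
    - intros. apply (S_perm n tau (fun y => fl sg (tau x) y)); auto. }
  rewrite D in A. fold (FF n tau) in A.
  set (Q := fun i j => fl tau i j * fl sg (tau i) (tau j)) in A.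
  rewrite (S_ext n (fun i => S n (fun j => fl tau i j * fl sg (tau i) (tau j))) (fun i => S n (fun j => Q i j))) in A by reflexivity.
  rewrite S_symm in A.
  rewrite (S_ext n (fun i => Q i i) (fun _ => 0)) in A by (intros; unfold Q; rewrite fl_diag; ring).
  rewrite S_const in A.
  rewrite (S_ext n (fun j => S (Z.to_nat j) (fun i => Q i j + Q j i)) (fun j => 2 * S (Z.to_nat j) (fun i => Q i j))) in A.
  2:{ intros j Hj. rewrite <- S_scal. apply S_ext. intros i Hi. rewrite Z2Nat.id in Hi by lia.
      unfold Q. destruct Gs as [Rs Is].
      assert (tau i <> tau j) by (intro E; apply It in E; lia).
      assert (sg (tau i) <> sg (tau j)) by (intro E; apply Is in E; try apply Rt; lia).
      rewrite (fl_sym tau i j), (fl_sym sg (tau i) (tau j)); lia. }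
  rewrite S_scal in A.
  exists (- S n (fun j => S (Z.to_nat j) (fun i => Q i j))). lia.
Qed.

Lemma Inv_Inv' a K : Inv a K = Inv' (Z.to_nat K) (rho a K).
Proof. reflexivity. Qed.

Lemma Inv'_ext n s1 s2 : (forall x, s1 x = s2 x) -> Inv' n s1 = Inv' n s2.
Proof.
  intros E. unfold Inv'. apply S_ext. intros. apply S_ext. intros. rewrite !E. reflexivity.
Qed.

Lemma good_rho a K : 0 < K -> Z.gcd K a = 1 -> goodp (Z.to_nat K) (rho a K).
Proof.
  intros HK Hg. split.
  - intros. pose proof (rho_range a K x HK). lia.
  - intros x y Hx Hy. apply (rho_inj a K); auto; lia.
Qed.

Lemma Inv_mul a b K : 0 < K -> Z.gcd K a = 1 -> Z.gcd K b = 1 ->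
  exists q, Inv (a * b) K = Inv a K + Inv b K + 2 * q.
Proof.
  intros HK Ha Hb.
  destruct (inv_comp (Z.to_nat K) (rho a K) (rho b K) (good_rho a K HK Ha) (good_rho b K HK Hb)) as [q Hq].
  exists q. rewrite !Inv_Inv', <- Hq. apply Inv'_ext. intros x. unfold rho.
  rewrite Zmult_mod_idemp_r. f_equal. ring.
Qed.

End W3.

Module W4.
Import W1.
Import W2.
Import W3.
Local Open Scope Z_scope.

Section Rec.
Variables a K : Z.
Hypothesis Ha : 0 < a.
Hypothesis HK : 0 < K.
Hypothesis Hg : Z.gcd a K = 1.

Let n := Z.to_nat K.
Let p := Z.to_nat a.
Let f r := (a * r) / K.
Let g s := (K * s) / a.

Lemma Hg' : Z.gcd K a = 1.
Proof. rewrite Z.gcd_comm. auto. Qed.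

Lemma f_range r : 0 <= r < K -> 0 <= f r <= a - 1.
Proof.
  intros Hr. unfold f. destruct (divmod (a*r) K HK) as [E B]. nia.
Qed.

Lemma g_range s : 0 <= s < a -> 0 <= g s <= K - 1.
Proof.
  intros Hs. unfold g. destruct (divmod (K*s) a Ha) as [E B]. nia.
Qed.

Lemma key_equiv r s : 0 <= r < K -> 1 <= s < a -> (s <=? f r) = (g s <? r).
Proof.
  intros Hr Hs. unfold f, g.
  destruct (divmod (a*r) K HK) as [E1 B1]. destruct (divmod (K*s) a Ha) as [E2 B2].
  assert (Hne : K * s <> a * r).
  { intro E. assert (D : (a | K * s)) by (exists r; lia).
    apply Z.gauss in D; auto. destruct D as [t Ht]. destruct (Z.le_gt_cases t 0); nia. }
  destruct (s <=? a * r / K) eqn:A; destruct (K * s / a <? r) eqn:B;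
  rewrite ?Z.leb_le, ?Z.leb_gt, ?Z.ltb_lt, ?Z.ltb_ge in *; auto; nia.
Qed.

Lemma E_sumf2 : S n (fun r => f r * f r) =
  (K - 1) * (a - 1) * (a - 1) - 2 * S p (fun s => s * g s) + S p g.
Proof.
  assert (Hn : Z.of_nat n = K) by (unfold n; lia).
  assert (Hp : Z.of_nat p = a) by (unfold p; lia).
  rewrite (S_ext n _ (fun r => S p (fun s => if (1 <=? s) && (s <=? f r) then 2 * s - 1 else 0))).
  2:{ intros r Hr. rewrite cnt1. pose proof (f_range r ltac:(lia)). rewrite Hp.
      replace (Z.max 0 (Z.min (f r) (a - 1))) with (f r) by lia. reflexivity.
      pose proof (f_range r ltac:(lia)). lia. }
  rewrite S_swap.
  rewrite (S_ext p _ (fun s => (K - 1) * (if (1 <=? s) && (s <=? a - 1) then 2 * s - 1 else 0)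
                              - 2 * (s * g s) + g s)).
  2:{ intros s Hs. rewrite Hp in Hs.
      destruct (Z.eq_dec s 0) as [->|Hs0].
      - unfold g. replace (K * 0 / a) with 0 by (rewrite Z.mul_0_r; reflexivity). change (1 <=? 0) with false. cbn [andb].
        rewrite S_const. ring.
      - assert (E1 : (1 <=? s) = true) by (apply Z.leb_le; lia).
        rewrite E1. cbn [andb].
        rewrite (S_ext n _ (fun r => (2 * s - 1) * (if g s <? r then 1 else 0))).
        2:{ intros r Hr. rewrite key_equiv by lia. destruct (g s <? r); ring. }
        rewrite S_scal, cnt2 by (pose proof (g_range s ltac:(lia)); lia).
        pose proof (g_range s ltac:(lia)). rewrite Hn.
        replace (s <=? a - 1) with true by (symmetry; apply Z.leb_le; lia).
        replace (Z.max 0 (K - 1 - g s)) with (K - 1 - g s) by lia. ring. }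
  rewrite S_add, S_sub, !S_scal, cnt1 by lia. rewrite Hp.
  replace (Z.max 0 (Z.min (a - 1) (a - 1))) with (a - 1) by lia. ring.
Qed.

Lemma E_sumg : 2 * S p g = (K - 1) * (a - 1).
Proof.
  assert (Hp : Z.of_nat p = a) by (unfold p; lia).
  pose proof (S_rho_perm K a (fun x => x) Ha Hg) as P. fold p in P.
  rewrite (S_ext p _ (fun s => K * s - a * g s)) in P.
  2:{ intros s Hs. unfold rho, g. destruct (divmod (K*s) a Ha) as [E B]. lia. }
  rewrite S_sub, !S_scal in P.
  pose proof (S_id' a ltac:(lia)) as I. fold p in I.
  assert (a * (2 * S p g) = a * ((K - 1) * (a - 1))) by nia.
  apply Z.mul_reg_l in H; lia.
Qed.

Lemma E_sq : K * K * S n (fun r => f r * f r) =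
   (1 - a * a) * S n (fun r => r * r) + 2 * a * K * S n (fun r => r * f r).
Proof.
  pose proof (S_rho_perm a K (fun x => x * x) HK Hg') as P. fold n in P.
  rewrite (S_ext n _ (fun r => a * a * (r * r) - 2 * a * K * (r * f r) + K * K * (f r * f r))) in P.
  2:{ intros r Hr. unfold rho, f. destruct (divmod (a*r) K HK) as [E B].
      set (q := a * r / K) in *. set (m := (a * r) mod K) in *. 
      assert (m = a * r - K * q) by lia. rewrite H. ring. }
  rewrite S_add, S_sub, !S_scal in P. lia.
Qed.

Lemma X_expand : X a K = a * S n (fun r => r * r) - K * S n (fun r => r * f r).
Proof.
  unfold X. fold n. rewrite <- !S_scal, <- S_sub. apply S_ext. intros r Hr.
  unfold rho, f. destruct (divmod (a*r) K HK) as [E B].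
  set (q := a * r / K) in *. set (m := (a * r) mod K) in *.
  assert (m = a * r - K * q) by lia. rewrite H. ring.
Qed.

Lemma X_expand' : X K a = K * S p (fun r => r * r) - a * S p (fun r => r * g r).
Proof.
  unfold X. fold p. rewrite <- !S_scal, <- S_sub. apply S_ext. intros r Hr.
  unfold rho, g. destruct (divmod (K*r) a Ha) as [E B].
  set (q := K * r / a) in *. set (m := (K * r) mod a) in *.
  assert (m = K * r - a * q) by lia. rewrite H. ring.
Qed.

Lemma reciprocity : 12 * a * a * X a K + 12 * K * K * X K a =
   a * K * (a * a + K * K + 1) + 3 * a * a * K * K * (a + K - 3).
Proof.
  rewrite X_expand, X_expand'.
  pose proof E_sumf2 as A. pose proof E_sumg as B. pose proof E_sq as C.
  pose proof (S_sq' K ltac:(lia)) as D. pose proof (S_sq' a ltac:(lia)) as E.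
  fold n in D. fold p in E.
  set (F := S n (fun r => r * f r)) in *.
  set (G := S p (fun r => r * g r)) in *.
  set (Sf := S n (fun r => f r * f r)) in *.
  set (SK := S n (fun r => r * r)) in *.
  set (Sa := S p (fun r => r * r)) in *.
  set (Sg := S p g) in *.
  rewrite A in C.
  assert (CD : 2 * a * K * F + 2 * K * K * G = K * K * ((K - 1) * (a - 1) * (a - 1)) + K * K * Sg - (1 - a * a) * SK) by lia.
  assert (T : 12 * a * a * (a * SK - K * F) + 12 * K * K * (K * Sa - a * G)
     = 12 * a * a * a * SK + 12 * K * K * K * Sa - 6 * a * (2 * a * K * F + 2 * K * K * G)) by ring.
  rewrite T, CD.
  replace (12 * a * a * a * SK + 12 * K * K * K * Sa -
   6 * a * (K * K * ((K - 1) * (a - 1) * (a - 1)) + K * K * Sg - (1 - a * a) * SK))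
   with ((a * a * a + a) * (6 * SK) + 2 * K * K * K * (6 * Sa) - 3 * a * K * K * (2 * Sg)
          - 6 * a * K * K * ((K - 1) * (a - 1) * (a - 1))) by ring.
  rewrite D, E, B. ring.
Qed.
End Rec.

End W4.

Module W5.
Import W1.
Import W2.
Import W3.
Import W4.
Local Open Scope R_scope.

Lemma ds_partial (h K : Z) (N : nat) : (0 < K)%Z ->
  2 * IZR K * IZR K * sum_n_m (fun n : nat =>
      let r := Z.of_nat n in
      (IZR r / IZR K) *
      (IZR (h * r) / IZR K - IZR ((h * r) / K)%Z - 1 / 2)) 1 N
  = IZR (W1.S (Datatypes.S N) (fun r => 2 * r * rho h K r - K * r)%Z).
Proof.
  intros HK. assert (HKR : IZR K <> 0) by (apply not_0_IZR; lia).
  induction N.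
  - rewrite sum_n_m_zero by lia. rewrite S_succ, S_0. simpl. rewrite Z.mul_0_r. simpl. unfold zero; simpl. ring.
  - rewrite sum_n_Sm by lia. rewrite S_succ.
    match goal with |- context [plus ?A ?B] => change (plus A B) with (A + B) end.
    rewrite Rmult_plus_distr_l, IHN, plus_IZR. f_equal.
    set (r := Z.of_nat (Datatypes.S N)).
    destruct (divmod (h * r) K HK) as [E B].
    unfold rho. rewrite E at 1. rewrite plus_IZR, !mult_IZR, minus_IZR, !mult_IZR.
    field. auto.
Qed.

Lemma ds_X (h K : Z) : (0 < K)%Z ->
  4 * IZR K * IZR K * dedekind_sum h K = IZR (4 * X h K - K * K * (K - 1))%Z.
Proof.
  intros HK.
  replace (4 * IZR K * IZR K * dedekind_sum h K) with (2 * (2 * IZR K * IZR K * dedekind_sum h K)) by ring.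
  unfold dedekind_sum. rewrite ds_partial by auto.
  replace (Datatypes.S (Z.to_nat K - 1)) with (Z.to_nat K) by lia.
  rewrite S_sub, <- mult_IZR. f_equal.
  rewrite (S_ext _ (fun r => 2 * r * rho h K r)%Z (fun r => 2 * (r * rho h K r))%Z) by (intros; ring).
  rewrite !S_scal. fold (X h K). pose proof (S_id' K ltac:(lia)). nia.
Qed.

End W5.

Module W6.
Import W1.
Import W2.
Import W3.
Import W4.
Import W5.
Local Open Scope R_scope.

Definition P (H K Y : Z) : Z :=
  (4 * (K * (H * H + K * K + 1) + 3 * H * K * K * (H + K - 3) - 12 * K * K * Y)
   - 12 * H * K * K * (K - 1))%Z.

Ltac pushIZR := repeat (rewrite ?plus_IZR, ?minus_IZR, ?mult_IZR, ?opp_IZR in *).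

Lemma sval (H K Y : Z) (s : R) : (0 < H)%Z -> (0 < K)%Z ->
  IZR (48 * H * K * K) * s = IZR (P H K Y) -> s = IZR (P H K Y) / IZR (48 * H * K * K).
Proof.
  intros. rewrite <- H2. field. apply not_0_IZR. nia.
Qed.

Lemma final1 (m H hp j t q3 Y1 Y2 Y3 W n0 : Z) (s1 s2 s3 s6 : R) :
  (0 < m)%Z -> (0 < H)%Z ->
  IZR (48 * H * m * m) * s1 = IZR (P H m Y1) ->
  IZR (48 * H * (2*m) * (2*m)) * s2 = IZR (P H (2*m) Y2) ->
  IZR (48 * H * (3*m) * (3*m)) * s3 = IZR (P H (3*m) Y3) ->
  IZR (48 * H * (6*m) * (6*m)) * s6 = IZR (P H (6*m) (2 * W - Y1 - Y3 + Y2)) ->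
  (3 * q3 = 1 - H * H)%Z -> (216 * m * t = H * hp + 1)%Z ->
  (n0 * H = 2 * m * q3 - W + t * (9 - 72 * m * m))%Z ->
  s1 + s3 + s6 - s2 = - (2 / (36 * IZR (6 * m))) *
     IZR (18 * (6*m) + (216 * m * j + H) * (-9 - 9 * (6*m) - 4 * (6*m) ^ 2) + hp * (9 - 2 * (6*m) ^ 2))
     + 2 * IZR (n0 + j * (-9 - 54 * m - 144 * m * m)).
Proof.
  intros Hm HH E1 E2 E3 E6 Q T N.
  apply sval in E1, E2, E3, E6; auto; try lia.
  rewrite E1, E2, E3, E6. unfold P.
  assert (HR : IZR H <> 0) by (apply not_0_IZR; lia).
  assert (MR : IZR m <> 0) by (apply not_0_IZR; lia).
  rewrite !Z.pow_2_r. apply (f_equal IZR) in Q, T, N. pushIZR.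
  assert (En0 : IZR n0 = (2 * IZR m * IZR q3 - IZR W + IZR t * (9 - 72 * IZR m * IZR m)) / IZR H).
  { rewrite <- N. field. auto. }
  assert (Eq3 : IZR q3 = (1 - IZR H * IZR H) / 3) by lra.
  assert (Ehp : IZR hp = (216 * IZR m * IZR t - 1) / IZR H).
  { rewrite T. field. auto. }
  rewrite En0, Ehp, Eq3. field. auto.
Qed.

Lemma final2 (m H hp j t q3 Y1 Y2 Y3 W n0 : Z) (s1 s2 s3 s6 : R) :
  (0 < m)%Z -> (0 < H)%Z ->
  IZR (48 * H * m * m) * s1 = IZR (P H m Y1) ->
  IZR (48 * H * (2*m) * (2*m)) * s2 = IZR (P H (2*m) Y2) ->
  IZR (48 * H * (3*m) * (3*m)) * s3 = IZR (P H (3*m) Y3) ->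
  IZR (48 * H * (6*m) * (6*m)) * s6 = IZR (P H (6*m) (2 * W - Y3 - Y2 + 3 * Y1)) ->
  (3 * q3 = 1 - H * H)%Z -> (216 * m * t = H * hp + 1)%Z ->
  (n0 * H = 2 * m * q3 - W - 2 * t * (9 + 36 * m * m))%Z ->
  s3 + s2 + s6 - 3 * s1 = - (2 / (18 * IZR (6 * m))) *
     IZR ((216 * m * j + H) * (9 - 2 * (6*m) ^ 2) + hp * (-9 - (6*m) ^ 2))
     + 2 * IZR (n0 + 2 * j * (9 - 72 * m * m)).
Proof.
  intros Hm HH E1 E2 E3 E6 Q T N.
  apply sval in E1, E2, E3, E6; auto; try lia.
  rewrite E1, E2, E3, E6. unfold P.
  assert (HR : IZR H <> 0) by (apply not_0_IZR; lia).
  assert (MR : IZR m <> 0) by (apply not_0_IZR; lia).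
  rewrite !Z.pow_2_r. apply (f_equal IZR) in Q, T, N. pushIZR.
  assert (En0 : IZR n0 = (2 * IZR m * IZR q3 - IZR W - 2 * IZR t * (9 + 36 * IZR m * IZR m)) / IZR H).
  { rewrite <- N. field. auto. }
  assert (Eq3 : IZR q3 = (1 - IZR H * IZR H) / 3) by lra.
  assert (Ehp : IZR hp = (216 * IZR m * IZR t - 1) / IZR H).
  { rewrite T. field. auto. }
  rewrite En0, Ehp, Eq3. field. auto.
Qed.

End W6.

Module W7.
Import W1.
Import W2.
Import W3.
Import W4.
Import W5.
Import W6.
Local Open Scope R_scope.

Lemma expi_add a b : (expi a * expi b)%C = expi (a + b).
Proof. unfold expi, Cmult; simpl. rewrite cos_plus, sin_plus. f_equal; ring. Qed.

Lemma expi_inv a : (/ expi a)%C = expi (- a).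
Proof.
  unfold expi, Cinv; simpl. rewrite cos_neg, sin_neg.
  assert (E : cos a ^ 2 + sin a ^ 2 = 1) by (rewrite Rplus_comm; simpl; rewrite !Rmult_1_r; apply sin2_cos2).
  simpl in E. rewrite E. f_equal; field.
Qed.

Lemma expi_div a b : (expi a / expi b)%C = expi (a - b).
Proof. unfold Cdiv. rewrite expi_inv, expi_add. reflexivity. Qed.

Lemma expi_pow3 a : (expi a ^ 3)%C = expi (3 * a).
Proof.
  simpl. replace (RtoC 1) with (expi 0).
  - rewrite !expi_add. f_equal. ring.
  - unfold expi, RtoC. rewrite cos_0, sin_0. reflexivity.
Qed.

Lemma expi_per x (n : Z) : expi (x + 2 * PI * IZR n) = expi x.
Proof.
  destruct (Z_le_gt_dec 0 n) as [Hn|Hn].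
  - rewrite <- (Z2Nat.id n Hn), <- INR_IZR_INZ. unfold expi.
    replace (x + 2 * PI * INR (Z.to_nat n)) with (x + 2 * INR (Z.to_nat n) * PI) by ring.
    rewrite cos_period, sin_period. reflexivity.
  - replace n with (- Z.of_nat (Z.to_nat (- n)))%Z by lia.
    rewrite opp_IZR, <- INR_IZR_INZ. unfold expi.
    set (y := x + 2 * PI * - INR (Z.to_nat (- n))).
    replace x with (y + 2 * INR (Z.to_nat (- n)) * PI) by (unfold y; ring).
    rewrite cos_period, sin_period. reflexivity.
Qed.

Lemma coprime_lemma (x y : Z) : (forall d, (d | x) -> (d | y) -> (d | 1))%Z -> Z.gcd x y = 1%Z.
Proof.
  intros Hd. pose proof (Hd _ (Z.gcd_divide_l x y) (Z.gcd_divide_r x y)) as D.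
  apply Z.divide_1_r in D. pose proof (Z.gcd_nonneg x y). lia.
Qed.

Lemma Y_facts (H K : Z) : (0 < H)%Z -> (0 < K)%Z -> Z.gcd H K = 1%Z -> Z.gcd H 6 = 1%Z ->
  exists Y, (6 * Y = (H - 1) * (2 * H - 1) - 2 * Inv K H)%Z /\
    (12 * H * X H K + 12 * K * K * Y = K * (H * H + K * K + 1) + 3 * H * K * K * (H + K - 3))%Z /\
    (H | 12 * K * Y - K * K - 1)%Z.
Proof.
  intros HH HK G G6.
  pose proof (meyer K H HH G) as Me.
  assert (D : (H | 6 * X K H)%Z) by (exists ((H - 1) * (2 * H - 1) - 2 * Inv K H)%Z; lia).
  apply Z.gauss in D; auto. destruct D as [Y EY].
  exists Y. rewrite EY in Me.
  assert (A : (6 * Y = (H - 1) * (2 * H - 1) - 2 * Inv K H)%Z).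
  { apply (Z.mul_reg_l _ _ H); lia. }
  rewrite Z.gcd_comm in G.
  pose proof (reciprocity H K HH HK (eq_trans (Z.gcd_comm H K) G)) as R.
  rewrite EY in R.
  assert (B : (12 * H * X H K + 12 * K * K * Y = K * (H * H + K * K + 1) + 3 * H * K * K * (H + K - 3))%Z).
  { apply (Z.mul_reg_l _ _ H); lia. }
  split; [auto|split; [auto|]].
  assert (D2 : (H | K * (12 * K * Y - K * K - 1))%Z).
  { exists (K * H + 3 * K * K * (H + K - 3) - 12 * X H K)%Z. nia. }
  apply Z.gauss in D2; auto. rewrite Z.gcd_comm. auto.
Qed.

Lemma s_rel (H K Y Xv : Z) (s : R) :
  4 * IZR K * IZR K * s = IZR (4 * Xv - K * K * (K - 1))%Z ->
  (12 * H * Xv + 12 * K * K * Y = K * (H * H + K * K + 1) + 3 * H * K * K * (H + K - 3))%Z ->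
  IZR (48 * H * K * K) * s = IZR (P H K Y).
Proof.
  intros E1 E2.
  replace (IZR (48 * H * K * K)) with (12 * IZR H * (4 * IZR K * IZR K)) by (rewrite !mult_IZR; ring).
  rewrite Rmult_assoc, E1, <- !mult_IZR. f_equal. unfold P. lia.
Qed.

Lemma per_X h H K : (0 < K)%Z -> (K | h - H)%Z -> X h K = X H K.
Proof.
  intros HK [u Hu]. unfold X. apply S_ext. intros r Hr. f_equal. unfold rho.
  replace (h * r)%Z with (H * r + (u * r) * K)%Z by nia. apply Z.mod_add. lia.
Qed.

End W7.

Import W1 W2 W3 W4 W5 W6 W7.
Open Scope C_scope.

Theorem lemma3p1 (k h h' : Z)
  (hk : (0 < k)%Z) (h6 : (6 | k)%Z) (hcop : Z.gcd h k = 1%Z)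
  (hh' : Z.modulo (h * h' + 1) (36 * k) = 0%Z) :
  (omega h (k / 6) * omega h (k / 2) * omega h k) / omega h (k / 3)
    = expi (- (2 * PI / (36 * IZR k)) *
            IZR (18 * k + h * (-9 - 9 * k - 4 * k ^ 2) + h' * (9 - 2 * k ^ 2)))
  /\
  (omega h (k / 3) * omega h (k / 2) * omega h k) / (omega h (k / 6) ^ 3)
    = expi (- (2 * PI / (18 * IZR k)) *
            IZR (h * (9 - 2 * k ^ 2) + h' * (-9 - k ^ 2))).
Proof.
  destruct h6 as [m Hm].
  assert (Hm0 : (0 < m)%Z) by lia.
  assert (Ek6 : (k / 6 = m)%Z) by (rewrite Hm; apply Z.div_mul; lia).
  assert (Ek2 : (k / 2 = 3 * m)%Z)
    by (rewrite Hm; replace (m * 6)%Z with ((3 * m) * 2)%Z by ring; apply Z.div_mul; lia).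
  assert (Ek3 : (k / 3 = 2 * m)%Z)
    by (rewrite Hm; replace (m * 6)%Z with ((2 * m) * 3)%Z by ring; apply Z.div_mul; lia).
  rewrite Ek6, Ek2, Ek3.
  set (M := (216 * m)%Z).
  destruct (divmod h M ltac:(unfold M; lia)) as [Eh BH].
  set (H := (h mod M)%Z) in *. set (j := (h / M)%Z) in *. clearbody H j.
  assert (kM : (k | M)%Z) by (exists 36%Z; unfold M; lia).
  assert (cop : forall c, (c | k)%Z -> Z.gcd H c = 1%Z).
  { intros c Hc. apply coprime_lemma. intros d dH dc. rewrite <- hcop. apply Z.gcd_greatest.
    - rewrite Eh. apply Z.divide_add_r; auto. apply Z.divide_mul_l.
      apply (Z.divide_trans _ c); auto. apply (Z.divide_trans _ k); auto.
    - apply (Z.divide_trans _ c); auto. }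
  assert (G2 : Z.gcd H 2 = 1%Z) by (apply cop; exists (3 * m)%Z; lia).
  assert (G3 : Z.gcd H 3 = 1%Z) by (apply cop; exists (2 * m)%Z; lia).
  assert (G6 : Z.gcd H 6 = 1%Z) by (apply cop; exists m; lia).
  assert (Gm : Z.gcd H m = 1%Z) by (apply cop; exists 6%Z; lia).
  assert (G2m : Z.gcd H (2 * m) = 1%Z) by (apply cop; exists 3%Z; lia).
  assert (G3m : Z.gcd H (3 * m) = 1%Z) by (apply cop; exists 2%Z; lia).
  assert (G6m : Z.gcd H (6 * m) = 1%Z) by (apply cop; exists 1%Z; lia).
  assert (HH : (0 < H)%Z).
  { destruct (Z.eq_dec H 0) as [E|E]; [|lia]. rewrite E in G2. discriminate. }
  assert (Hodd : exists v, H = (2 * v + 1)%Z).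
  { exists (H / 2)%Z. destruct (divmod H 2 ltac:(lia)) as [E B].
    destruct (Z.eq_dec (H mod 2) 0) as [E0|E0]; [|lia].
    exfalso. assert (D : (2 | 1)%Z).
    { rewrite <- G2. apply Z.gcd_greatest; [exists (H / 2)%Z; lia | apply Z.divide_refl]. }
    apply Z.divide_1_r in D. lia. }
  destruct Hodd as [v Hv].
  assert (Hq3 : exists q3, (3 * q3 = 1 - H * H)%Z).
  { destruct (divmod H 3 ltac:(lia)) as [E B]. set (u := (H / 3)%Z) in *.
    destruct (Z.eq_dec (H mod 3) 0) as [E0|E0].
    - exfalso. assert (D : (3 | 1)%Z).
      { rewrite <- G3. apply Z.gcd_greatest; [exists u; lia | apply Z.divide_refl]. }
      apply Z.divide_1_r in D. lia.
    - destruct (Z.eq_dec (H mod 3) 1) as [E1|E1].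
      + exists (- (3 * u * u + 2 * u))%Z. rewrite E1 in E. rewrite E. ring.
      + assert (E2 : (H mod 3 = 2)%Z) by lia. exists (- (3 * u * u + 4 * u + 1))%Z.
        rewrite E2 in E. rewrite E. ring. }
  destruct Hq3 as [q3 Q3].
  apply Zmod_divides in hh'; [|lia]. destruct hh' as [c0 Ec0].
  assert (T : (216 * m * (c0 - j * h') = H * h' + 1)%Z).
  { assert (E : H = (h - M * j)%Z) by lia. rewrite E. unfold M. rewrite Hm in Ec0.
    replace ((h - 216 * m * j) * h' + 1)%Z with ((h * h' + 1) - 216 * m * j * h')%Z by ring.
    rewrite Ec0. ring. }
  set (t := (c0 - j * h')%Z) in T. clearbody t.
  destruct (Y_facts H m HH Hm0 Gm G6) as [Y1 [A1 [B1 C1]]].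
  destruct (Y_facts H (2 * m) HH ltac:(lia) G2m G6) as [Y2 [A2 [B2 C2]]].
  destruct (Y_facts H (3 * m) HH ltac:(lia) G3m G6) as [Y3 [A3 [B3 C3]]].
  destruct (Y_facts H (6 * m) HH ltac:(lia) G6m G6) as [Y6 [A6 [B6 C6]]].
  assert (G2' : Z.gcd H 2 = 1%Z) by auto.
  destruct (Inv_mul 2 m H HH G2 Gm) as [q1 Q1].
  destruct (Inv_mul 3 m H HH G3 Gm) as [q2 Q2].
  destruct (Inv_mul 2 (3 * m) H HH G2 G3m) as [q4 Q4].
  replace (2 * (3 * m))%Z with (6 * m)%Z in Q4 by ring.
  assert (He : ((H - 1) * (2 * H - 1) = 2 * (v * (4 * v + 1)))%Z) by (rewrite Hv; ring).
  set (e := (v * (4 * v + 1))%Z) in He. clearbody e.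
  remember ((H - 1) * (2 * H - 1))%Z as EE.
  assert (EW : (Y1 + Y3 + Y6 - Y2 = 2 * ((e - Inv m H - Inv 3 H - 2 * q2 - q4 + q1) - (Y1 + Y3 + Y6 - Y2)))%Z) by lia.
  set (W := ((e - Inv m H - Inv 3 H - 2 * q2 - q4 + q1) - (Y1 + Y3 + Y6 - Y2))%Z) in EW. clearbody W.
  assert (EW2 : (Y3 + Y2 + Y6 - 3 * Y1 = 2 * (- (Inv 3 H + Inv 2 H + 2 * q2 + q1 + q4) - (Y3 + Y2 + Y6 - 3 * Y1)))%Z) by lia.
  set (W2 := (- (Inv 3 H + Inv 2 H + 2 * q2 + q1 + q4) - (Y3 + Y2 + Y6 - 3 * Y1))%Z) in EW2. clearbody W2.
  subst EE.
  destruct C1 as [d1 D1]. destruct C2 as [d2 D2]. destruct C3 as [d3 D3]. destruct C6 as [d6 D6].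
  assert (Alpha : (H | 12 * m * (2 * W) - 8 * m * m - 1)%Z).
  { apply (Z.gauss _ 6); auto. exists (6 * d1 + 2 * d3 + d6 - 3 * d2)%Z. rewrite <- EW.
    replace ((6 * d1 + 2 * d3 + d6 - 3 * d2) * H)%Z with (6 * (d1 * H) + 2 * (d3 * H) + d6 * H - 3 * (d2 * H))%Z by ring.
    rewrite <- D1, <- D2, <- D3, <- D6. ring. }
  assert (Alpha2 : (H | 12 * m * (2 * W2) - 8 * m * m + 2)%Z).
  { apply (Z.gauss _ 6); auto. exists (2 * d3 + 3 * d2 + d6 - 18 * d1)%Z. rewrite <- EW2.
    replace ((2 * d3 + 3 * d2 + d6 - 18 * d1) * H)%Z with (2 * (d3 * H) + 3 * (d2 * H) + d6 * H - 18 * (d1 * H))%Z by ring.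
    rewrite <- D1, <- D2, <- D3, <- D6. ring. }
  destruct Alpha as [al Eal]. destruct Alpha2 as [al2 Eal2].
  assert (div6 : forall x, (H | 1296 * m * x)%Z -> (H | x)%Z).
  { intros x Dx. replace (1296 * m * x)%Z with (6 * (6 * (6 * (6 * (m * x)))))%Z in Dx by ring.
    apply Z.gauss in Dx; auto. apply Z.gauss in Dx; auto. apply Z.gauss in Dx; auto.
    apply Z.gauss in Dx; auto. apply Z.gauss in Dx; auto. }
  assert (DM0 : (H | 2 * m * q3 - W + t * (9 - 72 * m * m))%Z).
  { apply div6. exists (-864 * m * m * H - 54 * al + 6 * h' * (9 - 72 * m * m))%Z.
    replace (1296 * m * (2 * m * q3 - W + t * (9 - 72 * m * m)))%Z with
      (864 * m * m * (3 * q3) - 54 * (12 * m * (2 * W)) + 6 * (9 - 72 * m * m) * (216 * m * t))%Z by ring.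
    assert (E' : (12 * m * (2 * W) = al * H + 8 * m * m + 1)%Z) by (rewrite <- Eal; ring).
    rewrite Q3, T, E'. ring. }
  assert (DM2 : (H | 2 * m * q3 - W2 - 2 * t * (9 + 36 * m * m))%Z).
  { apply div6. exists (-864 * m * m * H - 54 * al2 - 12 * h' * (9 + 36 * m * m))%Z.
    replace (1296 * m * (2 * m * q3 - W2 - 2 * t * (9 + 36 * m * m)))%Z with
      (864 * m * m * (3 * q3) - 54 * (12 * m * (2 * W2)) - 12 * (9 + 36 * m * m) * (216 * m * t))%Z by ring.
    assert (E' : (12 * m * (2 * W2) = al2 * H + 8 * m * m - 2)%Z) by (rewrite <- Eal2; ring).
    rewrite Q3, T, E'. ring. }
  destruct DM0 as [n0 En0]. destruct DM2 as [n2 En2].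
  assert (SR : forall K Y, (0 < K)%Z -> (K | 216 * m)%Z ->
     (12 * H * X H K + 12 * K * K * Y = K * (H * H + K * K + 1) + 3 * H * K * K * (H + K - 3))%Z ->
     (IZR (48 * H * K * K) * dedekind_sum h K = IZR (P H K Y))%R).
  { intros K Y HK0 [u Hu] EB. apply (s_rel H K Y (X H K)); auto.
    rewrite <- (per_X h H K HK0). apply ds_X; auto.
    exists (u * j)%Z. rewrite Eh. unfold M. rewrite Hu. ring. }
  pose proof (SR m Y1 Hm0 ltac:(exists 216%Z; ring) B1) as S1.
  pose proof (SR (2 * m)%Z Y2 ltac:(lia) ltac:(exists 108%Z; ring) B2) as S2.
  pose proof (SR (3 * m)%Z Y3 ltac:(lia) ltac:(exists 72%Z; ring) B3) as S3.
  pose proof (SR (6 * m)%Z Y6 ltac:(lia) ltac:(exists 36%Z; ring) B6) as S6.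
  assert (S6a := S6). assert (S6b := S6).
  replace Y6 with (2 * W - Y1 - Y3 + Y2)%Z in S6a by lia.
  replace Y6 with (2 * W2 - Y3 - Y2 + 3 * Y1)%Z in S6b by lia.
  pose proof (final1 m H h' j t q3 Y1 Y2 Y3 W n0 _ _ _ _ Hm0 HH S1 S2 S3 S6a Q3 T (eq_sym En0)) as F1.
  pose proof (final2 m H h' j t q3 Y1 Y2 Y3 W2 n2 _ _ _ _ Hm0 HH S1 S2 S3 S6b Q3 T (eq_sym En2)) as F2.
  assert (Eh' : (216 * m * j + H)%Z = h) by (unfold M in Eh; lia).
  rewrite Eh' in F1, F2.
  rewrite Hm. replace (m * 6)%Z with (6 * m)%Z by ring.
  assert (m6 : IZR (6 * m) <> 0%R) by (apply not_0_IZR; lia).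
  split.
  - unfold omega. rewrite !expi_add, expi_div.
    match goal with |- expi ?x = expi ?y => replace x with (y + 2 * PI * IZR (n0 + j * (-9 - 54 * m - 144 * m * m)))%R end.
    + apply expi_per.
    + replace (PI * dedekind_sum h m + PI * dedekind_sum h (3 * m) + PI * dedekind_sum h (6 * m) -
        PI * dedekind_sum h (2 * m))%R with
        (PI * (dedekind_sum h m + dedekind_sum h (3 * m) + dedekind_sum h (6 * m) - dedekind_sum h (2 * m)))%R by ring.
      rewrite F1. field. auto.
  - unfold omega. rewrite expi_pow3, !expi_add, expi_div.
    match goal with |- expi ?x = expi ?y => replace x with (y + 2 * PI * IZR (n2 + 2 * j * (9 - 72 * m * m)))%R end.
    + apply expi_per.
    + replace (PI * dedekind_sum h (2 * m) + PI * dedekind_sum h (3 * m) + PI * dedekind_sum h (6 * m) -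
        3 * (PI * dedekind_sum h m))%R with
        (PI * (dedekind_sum h (3 * m) + dedekind_sum h (2 * m) + dedekind_sum h (6 * m) - 3 * dedekind_sum h m))%R by ring.
      rewrite F2. field. auto.
Qed.
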